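(* Let $F$ be a field with $\operatorname{char}F\ne2$, $D$ a finite-dimensional central division $F$-algebra with involution $\ast$, $\eta\in F$ with $\eta\eta^\ast=1$, $n\ge1$, $A\in M_n(D)$ invertible with $\eta A^\ast=A$ (where $[x_{ij}]^\ast=[x_{ji}^\ast]$), and $X^\#=A^{-1}X^\ast A$. If $\eta\neq-1$ or $\ast|_D\neq\mathrm{id}$, then the following are equivalent: (1) $\#$ is formally real on $M_n(D)$; (2) there exists a $1$-hermitian cone on $(M_n(D),\#)$ containing the identity matrix $I$; (3) there exists an $\eta$-hermitian cone on $(M_n(D),\ast)$ containing $A$; (4) there exist an invertible $P\in M_n(D)$ with $P^\ast AP=\mathrm{diag}(d_1,\dots,d_n)$ and an $\eta$-hermitian cone on $(D,\ast)$ containing $d_1,\dots,d_n$. If $\eta=-1$ and $\ast|_D=\mathrm{id}$, then $\#$ is not formally real.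
   Context: An involution $\#$ on a ring $R$ is formally real if every finite sum of nonzero elements of the form $rr^\#$ ($r\in R$) is nonzero. For a ring $R$ with involution $\ast$ whose center contains $F$ with $F^\ast\subseteq F$, and $\varepsilon\in F$ with $\varepsilon\varepsilon^\ast=1$, an element $a\in R$ is $\varepsilon$-hermitian if $\varepsilon a^\ast=a$; $S_\varepsilon(R)$ is the set of such elements. An $\varepsilon$-hermitian cone on $(R,\ast)$ is a subset $M\subseteq S_\varepsilon(R)$ with $M+M\subseteq M$, $aMa^\ast\subseteq M$ for every $a\in R$, and $M\cap-M=\{0\}$. *)

(* Defs.v *)
From HB Require Import structures.
From mathcomp Require Import all_boot all_order all_algebra all_field.
Set Implicit Arguments. Unset Strict Implicit. Unset Printing Implicit Defensive.
Import GRing.Theory.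
Local Open Scope ring_scope.

Definition is_involution (R : nzRingType) (s : R -> R) : Prop :=
  [/\ forall x y, s (x + y) = s x + s y,
      forall x y, s (x * y) = s y * s x &
      forall x, s (s x) = x].

Definition formally_real (R : nzRingType) (s : R -> R) : Prop :=
  forall l : seq R, l != [::] -> all (fun r => r * s r != 0) l ->
    \sum_(r <- l) r * s r != 0.

Definition eps_herm (R : nzRingType) (s : R -> R) (eps a : R) : Prop :=
  eps * s a = a.

Definition herm_cone (R : nzRingType) (s : R -> R) (eps : R) (M : R -> Prop)
  : Prop :=
  [/\ forall a, M a -> eps_herm s eps a,
      forall a b, M a -> M b -> M (a + b),
      forall a x, M x -> M (a * x * s a),
      M 0 &
      forall x, M x -> M (- x) -> x = 0].

Definition mstar (D : nzRingType) (s : D -> D) (n : nat) (X : 'M[D]_n)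
  : 'M[D]_n := (map_mx s X)^T.

(* X^# = A^{-1} X^* A, where Ainv is the (two-sided) inverse of A. *)
Definition sharp (D : nzRingType) (s : D -> D) (n : nat) (A Ainv X : 'M[D]_n)
  : 'M[D]_n := Ainv *m mstar s X *m A.

(* Main.v *)
Require Import Defs.
From HB Require Import structures.
From mathcomp Require Import all_boot all_order all_algebra all_field.
From Stdlib Require Import Classical.
Set Implicit Arguments. Unset Strict Implicit. Unset Printing Implicit Defensive.
Import GRing.Theory.
Local Open Scope ring_scope.

Section Basic.
Variable D : nzRingType.
Variable s : D -> D.
Hypothesis Hs : is_involution s.

Lemma sD x y : s (x + y) = s x + s y. Proof. by case: Hs. Qed.
Lemma sM x y : s (x * y) = s y * s x. Proof. by case: Hs. Qed.
Lemma sK x : s (s x) = x. Proof. by case: Hs. Qed.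
Lemma s0 : s 0 = 0.
Proof. by apply: (addrI (s 0)); rewrite -sD !addr0. Qed.
Lemma sN x : s (- x) = - s x.
Proof. by apply/eqP; rewrite -addr_eq0 -sD addNr s0. Qed.
Lemma sB x y : s (x - y) = s x - s y. Proof. by rewrite sD sN. Qed.
Lemma s1 : s 1 = 1.
Proof. have := sM (s 1) 1. rewrite mulr1 !sK mulr1. move=> h. by rewrite -h. Qed.
Lemma s_sum I (r : seq I) P (f : I -> D) :
  s (\sum_(i <- r | P i) f i) = \sum_(i <- r | P i) s (f i).
Proof. exact: (big_morph s sD s0). Qed.
Lemma s_inj : injective s. Proof. exact: (can_inj sK). Qed.
Lemma s_eq0 x : (s x == 0) = (x == 0).
Proof. by apply/eqP/eqP=> [h|->]; [rewrite -(sK x) h s0 | exact: s0]. Qed.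

Variable N : nat.
Notation ms := (@mstar D s N).

Lemma msE X i j : ms X i j = s (X j i).
Proof. by rewrite /mstar !mxE. Qed.
Lemma msD X Y : ms (X + Y) = ms X + ms Y.
Proof. by apply/matrixP=> i j; rewrite !(msE, mxE) sD. Qed.
Lemma msN X : ms (- X) = - ms X.
Proof. by apply/matrixP=> i j; rewrite !(msE, mxE) sN. Qed.
Lemma ms0 : ms 0 = 0.
Proof. by apply/matrixP=> i j; rewrite !(msE, mxE) s0. Qed.
Lemma msK X : ms (ms X) = X.
Proof. by apply/matrixP=> i j; rewrite !msE sK. Qed.
Lemma msM X Y : ms (X *m Y) = ms Y *m ms X.
Proof.
apply/matrixP=> i j; rewrite !msE !mxE s_sum; apply: eq_bigr => k _.
by rewrite sM !msE.
Qed.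
Lemma ms_scalar c : ms c%:M = (s c)%:M.
Proof.
apply/matrixP=> i j; rewrite msE !mxE.
case: (i =P j) => [->|/eqP ij]; first by rewrite eqxx !mulr1n.
by rewrite eq_sym (negbTE ij) !mulr0n s0.
Qed.
Lemma ms1 : ms 1%:M = 1%:M. Proof. by rewrite ms_scalar s1. Qed.
Lemma ms_sum I (r : seq I) P (f : I -> 'M[D]_N) :
  ms (\sum_(i <- r | P i) f i) = \sum_(i <- r | P i) ms (f i).
Proof. exact: (big_morph ms msD ms0). Qed.

Definition Em (a : D) (p q : 'I_N) : 'M[D]_N :=
  \matrix_(i, j) (if (i == p) && (j == q) then a else 0).

Lemma EmE a p q (i j : 'I_N) : Em a p q i j = if (i == p) && (j == q) then a else 0.
Proof. by rewrite mxE. Qed.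

Lemma EmXE a p q (X : 'M[D]_N) i j : (Em a p q *m X) i j = if i == p then a * X q j else 0.
Proof.
rewrite mxE (bigD1 q) //= EmE eqxx andbT big1 ?addr0.
  by case: (i == p); rewrite ?mul0r.
by move=> k /negbTE kq; rewrite EmE kq andbF mul0r.
Qed.

Lemma XEmE (X : 'M[D]_N) b p q i j : (X *m Em b p q) i j = if j == q then X i p * b else 0.
Proof.
rewrite mxE (bigD1 p) //= EmE eqxx /= big1 ?addr0.
  by case: (j == q); rewrite ?mulr0.
by move=> k /negbTE kq; rewrite EmE kq mulr0.
Qed.

Lemma EmXEm a p q (X : 'M[D]_N) b p' q' :
  Em a p q *m X *m Em b p' q' = Em (a * X q p' * b) p q'.
Proof.
apply/matrixP=> i j; rewrite XEmE EmE EmXE.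
by case: (j == q'); case: (i == p); rewrite ?andbF ?andbT ?mul0r.
Qed.

Lemma msEm a p q : ms (Em a p q) = Em (s a) q p.
Proof.
apply/matrixP=> i j; rewrite msE !EmE andbC.
by case: (_ && _); rewrite ?s0.
Qed.

Lemma EmD a b p q : Em (a + b) p q = Em a p q + Em b p q.
Proof. by apply/matrixP=> i j; rewrite !mxE; case: (_ && _); rewrite ?addr0. Qed.
Lemma EmN a p q : Em (- a) p q = - Em a p q.
Proof. by apply/matrixP=> i j; rewrite !mxE; case: (_ && _); rewrite ?oppr0. Qed.
Lemma Em0 p q : Em 0 p q = 0.
Proof. by apply/matrixP=> i j; rewrite !mxE; case: (_ && _). Qed.

Lemma central_scalar c (X : 'M[D]_N) : (forall x, c * x = x * c) -> X *m c%:M = c%:M *m X.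
Proof.
move=> hc; apply/matrixP=> i j; rewrite mul_scalar_mx !mxE (bigD1 j) //= big1.
  by rewrite addr0 mxE eqxx mulr1n hc.
by move=> k /negbTE kj; rewrite mxE kj mulr0n mulr0.
Qed.

End Basic.

Section Main.
Variable F : fieldType.
Variable D : falgType F.
Variable s : D -> D.
Variable eta : F.
Variable n : nat.
Variables A Ainv : 'M[D]_n.+1.
Hypothesis H2 : (2%:R : F) != 0.
Hypothesis Hunit : forall x : D, x != 0 -> x \is a GRing.unit.
Hypothesis Hcent : forall z : D, (forall x : D, z * x = x * z) -> exists a : F, z = a%:A.
Hypothesis Hs : is_involution s.
Hypothesis Hsc : forall a : F, exists b : F, s a%:A = b%:A.
Hypothesis Heta : eta%:A * s eta%:A = 1.
Hypothesis HAAi : A *m Ainv = 1%:M.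
Hypothesis HAiA : Ainv *m A = 1%:M.
Hypothesis HAh : eps_herm (@mstar D s n.+1) (eta%:A)%:M A.

Local Notation N := n.+1.
Local Notation ms := (@mstar D s N).
Local Notation e := (eta%:A : D).
Local Notation sh := (sharp s A Ainv).

Lemma alg_central (a : F) (x : D) : a%:A * x = x * a%:A.
Proof. by rewrite mulr_algl mulr_algr. Qed.

Lemma e_c x : e * x = x * e. Proof. exact: alg_central. Qed.
Lemma e'_c x : s e * x = x * s e.
Proof. by have [b ->] := Hsc eta; exact: alg_central. Qed.
Lemma e'e : s e * e = 1. Proof. by rewrite e'_c. Qed.

Lemma E_c (X : 'M[D]_N) : X *m e%:M = e%:M *m X.
Proof. by apply: central_scalar; exact: e_c. Qed.
Lemma E'_c (X : 'M[D]_N) : X *m (s e)%:M = (s e)%:M *m X.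
Proof. by apply: central_scalar; exact: e'_c. Qed.
Lemma EE' : e%:M *m (s e)%:M = 1%:M :> 'M[D]_N.
Proof. by rewrite -scalar_mxM Heta. Qed.
Lemma E'E : (s e)%:M *m e%:M = 1%:M :> 'M[D]_N.
Proof. by rewrite -scalar_mxM e'e. Qed.

Lemma msA : ms A = (s e)%:M *m A.
Proof.
have h : e%:M *m ms A = A := HAh.
by rewrite -{2}h mulmxA E'E mul1mx.
Qed.

Lemma msAi : ms Ainv = e%:M *m Ainv.
Proof.
have h1 : ms Ainv *m ms A = 1%:M by rewrite -msM // HAAi ms1.
have h2 : ms A *m (e%:M *m Ainv) = 1%:M.
  by rewrite msA -mulmxA (mulmxA A) E_c -!mulmxA HAAi mulmx1 E'E.
by rewrite -[ms Ainv]mulmx1 -h2 mulmxA h1 mul1mx.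
Qed.

Lemma shE X : sh X = Ainv *m ms X *m A. Proof. by []. Qed.
Lemma shD X Y : sh (X + Y) = sh X + sh Y.
Proof. by rewrite !shE msD // mulmxDr mulmxDl. Qed.
Lemma sh0 : sh 0 = 0.
Proof. by rewrite shE ms0 // mulmx0 mul0mx. Qed.
Lemma shM X Y : sh (X *m Y) = sh Y *m sh X.
Proof.
by rewrite !shE msM // !mulmxA -(mulmxA _ A) HAAi mulmx1.
Qed.
Lemma shK X : sh (sh X) = X.
Proof.
rewrite !shE !msM // msK // msA msAi.
rewrite !mulmxA -(mulmxA _ Ainv) HAiA mulmx1 -(mulmxA Ainv) -E'_c mulmxA HAiA mul1mx.
by rewrite -mulmxA E_c mulmxA E'E mul1mx.
Qed.
Lemma sh1 : sh 1%:M = 1%:M.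
Proof. by rewrite shE ms1 // mulmx1 HAiA. Qed.
Lemma sh_sum I (r : seq I) (f : I -> 'M[D]_N) :
  sh (\sum_(i <- r) f i) = \sum_(i <- r) sh (f i).
Proof. exact: (big_morph sh shD sh0). Qed.


Lemma scal_inj (a b : F) : a%:A = b%:A :> D -> a = b.
Proof.
move/eqP; rewrite -subr_eq0 -scalerBl scaler_eq0 oner_eq0 orbF subr_eq0.
by move/eqP.
Qed.

Lemma two_reg (b : D) : b + b = 0 -> b = 0.
Proof.
move=> h; have : (2%:R : F) *: b = 0 by rewrite scaler_nat mulr2n.
by move/eqP; rewrite scaler_eq0 (negbTE H2) /= => /eqP.
Qed.

Lemma key (nb : ~ (eta = -1 /\ forall x : D, s x = x)) c :
  (forall l, c * l + s l * (e * s c) = 0) -> c = 0.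
Proof.
move=> h; case: (c =P 0) => // /eqP cnz; exfalso.
have cu := Hunit cnz.
have cui : c^-1 \is a GRing.unit by rewrite unitrV.
have h1 : e * s c = - c.
  have := h 1; rewrite mulr1 (s1 Hs) mul1r => /eqP.
  by rewrite addrC addr_eq0 => /eqP.
have hs : forall l, s l = c * l * c^-1.
  move=> l; have := h l; rewrite h1 mulrN => /eqP; rewrite subr_eq0 => /eqP ->.
  by rewrite mulrK.
have comm : forall x y : D, x * y = y * x.
  move=> x y; have := sM Hs x y; rewrite !hs.
  have -> : c * y * c^-1 * (c * x * c^-1) = c * (y * x) * c^-1.
    by rewrite !mulrA mulrVK.
  by move/(mulIr cui)/(mulrI cu).
have sid : forall x, s x = x.
  by move=> x; rewrite hs (comm c x) mulrK.
apply: nb; split => //; apply: scal_inj.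
have : (e + 1) * c = 0 * c.
  by rewrite mul0r mulrDl mul1r -(sid c) h1 sid addNr.
move/(mulIr cu)/eqP; rewrite addr_eq0 => /eqP ->.
by rewrite scaleN1r.
Qed.

Lemma ex_lam (nb : ~ (eta = -1 /\ forall x : D, s x = x)) c b :
  c != 0 -> exists l, c * l + s l * (e * s c) + s l * b * l != 0.
Proof.
move=> cnz; case: (classic (exists l, c * l + s l * (e * s c) + s l * b * l != 0)) => // hn.
exfalso; move/negP: cnz; apply.
have hall : forall l, c * l + s l * (e * s c) + s l * b * l = 0.
  by move=> l; apply/eqP; apply/negPn/negP => hl; apply: hn; exists l.
have b0 : b = 0.
  apply: two_reg; have h1 := hall 1; have hm := hall (-1).
  rewrite (s1 Hs) !mulr1 !mul1r in h1.
  rewrite (sN Hs) (s1 Hs) !mulrN1 !mulN1r opprK in hm.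
  have -> : b + b = (c + e * s c + b) + (- c - e * s c + b).
    by rewrite addrACA -opprD subrr add0r.
  by rewrite h1 hm addr0.
apply/eqP; apply: (key nb) => l; have := hall l.
by rewrite b0 mulr0 mul0r addr0.
Qed.


Lemma shM' (X Y : 'M[D]_N) : sh (X * Y) = sh Y * sh X.
Proof. exact: shM. Qed.

Lemma L12 : formally_real sh -> exists M, herm_cone sh 1 M /\ M 1.
Proof.
move=> fr.
pose M (X : 'M[D]_N) := exists l : seq 'M[D]_N, X = \sum_(r <- l) r * sh r.
have shrr : forall r : 'M[D]_N, sh (r * sh r) = r * sh r by move=> r; rewrite shM' shK.
exists M; split; last by exists [:: 1]; rewrite big_seq1 sh1 mulr1.
split.
- move=> a [l ->]; rewrite /eps_herm mul1r sh_sum; apply: eq_bigr => r _; exact: shrr.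
- by move=> a b [l1 ->] [l2 ->]; exists (l1 ++ l2); rewrite big_cat.
- move=> a x [l ->]; exists (map (fun r => a * r) l).
  rewrite big_map mulr_sumr mulr_suml; apply: eq_bigr => r _.
  by rewrite shM' !mulrA.
- by exists [::]; rewrite big_nil.
move=> x [l hx] [l' hx'].
pose P (r : 'M[D]_N) := r * sh r != 0.
have hs : forall l0, \sum_(r <- l0) r * sh r = \sum_(r <- filter P l0) r * sh r.
  move=> l0; rewrite big_filter [in RHS]big_mkcond /=; apply: eq_bigr => r _.
  by rewrite /P; case: eqP.
have tot : \sum_(r <- filter P (l ++ l')) r * sh r = 0.
  by rewrite -hs big_cat -hx -hx'; apply: subrr.
have al := filter_all P (l ++ l').
case E: (filter P (l ++ l')) al tot => [|r0 L] al tot.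
  move: E; rewrite filter_cat; case E1: (filter P l) => // _.
  by rewrite hx hs E1 big_nil.
by move: (fr (r0 :: L) isT al); rewrite tot eqxx.
Qed.

Lemma L21 : (exists M, herm_cone sh 1 M /\ M 1) -> formally_real sh.
Proof.
move=> [M [[Mh Mp Mc M0 Ma] M1]] l ln al.
have Mr : forall r, M (r * sh r) by move=> r; have := Mc r 1 M1; rewrite mulr1.
have Ms : forall l0, M (\sum_(r <- l0) r * sh r).
  by elim=> [|r l0 IH]; rewrite ?big_nil ?big_cons //; apply: Mp.
case: l ln al => [//|r l' _] /= /andP [hr _]; rewrite big_cons.
apply/negP=> /eqP h; move/negP: hr; apply; apply/eqP; apply: Ma (Mr r) _.
have -> : - (r * sh r) = \sum_(r <- l') r * sh r.
  by apply/eqP; rewrite eq_sym -addr_eq0 addrC h.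
exact: Ms.
Qed.


Lemma conj23 (a Y : 'M[D]_N) :
  Ainv *m (a *m Y *m ms a) = (Ainv *m a *m A) *m (Ainv *m Y) *m sh (Ainv *m a *m A).
Proof.
rewrite shE !msM // msA msAi !mulmxA.
rewrite -(mulmxA _ A Ainv) HAAi mulmx1.
rewrite -(mulmxA _ Ainv (s e)%:M) E'_c mulmxA -(mulmxA _ Ainv A) HAiA mulmx1.
rewrite -(mulmxA _ Ainv A) HAiA mulmx1.
by rewrite -(mulmxA _ (ms a)) E_c mulmxA -(mulmxA _ (s e)%:M) E'E mulmx1.
Qed.


Lemma conj32 (b X : 'M[D]_N) :
  A *m (b *m X *m sh b) = (A *m b *m Ainv) *m (A *m X) *m ms (A *m b *m Ainv).
Proof.
rewrite shE !msM // msA msAi !mulmxA.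
rewrite -(mulmxA _ Ainv A) HAiA mulmx1.
by rewrite -(mulmxA _ (ms b) (s e)%:M) E'_c mulmxA -(mulmxA _ Ainv (s e)%:M) E'_c mulmxA -(mulmxA _ e%:M (s e)%:M) EE' mulmx1.
Qed.


Lemma L23 : (exists M, herm_cone sh 1 M /\ M 1) ->
  exists M, herm_cone ms (e%:M) M /\ M A.
Proof.
move=> [M [[Mh Mp Mc M0 Ma] M1]].
exists (fun Y => M (Ainv *m Y)); split; last by rewrite HAiA; exact: M1.
split.
- move=> Y /Mh; rewrite /eps_herm mul1r shE => hX.
  change (e%:M *m ms Y = Y).
  have hY : Y = A *m (Ainv *m Y) by rewrite mulmxA HAAi mul1mx.
  move: hX hY; set X := Ainv *m Y => hX ->; rewrite msM // msA.
  rewrite !mulmxA -E_c -(mulmxA _ e%:M) EE' mulmx1.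
  by rewrite -[ms X *m A]mul1mx -HAAi -!mulmxA (mulmxA Ainv) hX.
- by move=> a b ha hb; rewrite mulmxDr; apply: Mp.
- move=> a Y hY; change (M (Ainv *m (a *m Y *m ms a))); rewrite conj23; exact: Mc.
- by rewrite mulmx0.
move=> Y /= h1 h2; rewrite mulmxN in h2; have h0 := Ma _ h1 h2.
by rewrite -[Y]mul1mx -HAAi -mulmxA h0 mulmx0.
Qed.

Lemma L32 : (exists M, herm_cone ms (e%:M) M /\ M A) ->
  exists M, herm_cone sh 1 M /\ M 1.
Proof.
move=> [M [[Mh Mp Mc M0 Ma] MA]].
exists (fun X => M (A *m X)); split; last by change (M (A *m 1%:M)); rewrite mulmx1.
split.
- move=> X /Mh hY; rewrite /eps_herm mul1r shE.
  change (e%:M *m ms (A *m X) = A *m X) in hY.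
  rewrite msM // msA !mulmxA -E_c -(mulmxA _ e%:M) EE' mulmx1 in hY.
  by rewrite -mulmxA hY mulmxA HAiA mul1mx.
- by move=> a b ha hb; rewrite mulmxDr; apply: Mp.
- move=> b X hX; change (M (A *m (b *m X *m sh b))); rewrite conj32; exact: Mc.
- by rewrite mulmx0.
move=> X /= h1 h2; rewrite mulmxN in h2; have h0 := Ma _ h1 h2.
by rewrite -[X]mul1mx -HAiA -mulmxA h0 mulmx0.
Qed.


Definition BB (P : 'M[D]_N) := ms P *m A *m P.

Lemma hermB P i j : BB P j i = e * s (BB P i j).
Proof.
have h : e%:M *m ms (BB P) = BB P.
  rewrite /BB !msM // msK // mulmxA -E_c -!mulmxA E_c (mulmxA (ms A)) E_c.
  by have -> : e%:M *m ms A = A := HAh; rewrite mulmxA.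
by move/matrixP: h => /(_ j i); rewrite mul_scalar_mx mxE msE => ->.
Qed.

Lemma rowB P Pinv : P *m Pinv = 1%:M -> Pinv *m P = 1%:M ->
  forall k, exists j, BB P k j != 0.
Proof.
move=> h1 h2 k; case: (classic (exists j, BB P k j != 0)) => // hn; exfalso.
have h0 : forall j, BB P k j = 0.
  by move=> j; apply/eqP; apply/negPn/negP => hj; apply: hn; exists j.
have hB : BB P *m (Pinv *m Ainv *m ms Pinv) = 1%:M.
  rewrite /BB !mulmxA -(mulmxA _ P Pinv) h1 mulmx1 -(mulmxA _ A Ainv) HAAi mulmx1.
  by rewrite -msM // h2 ms1.
move/matrixP: hB => /(_ k k); rewrite !mxE big1 ?eqxx.
  by move/eqP; rewrite eq_sym oner_eq0.
by move=> j _; rewrite h0 mul0r.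
Qed.

Lemma BB_comp (P Q : 'M[D]_N) : BB (P *m Q) = ms Q *m BB P *m Q.
Proof. by rewrite /BB msM // !mulmxA. Qed.

Lemma inv_comp (P Pinv Q Qinv : 'M[D]_N) :
  P *m Pinv = 1%:M -> Pinv *m P = 1%:M -> Q *m Qinv = 1%:M -> Qinv *m Q = 1%:M ->
  (P *m Q) *m (Qinv *m Pinv) = 1%:M /\ (Qinv *m Pinv) *m (P *m Q) = 1%:M.
Proof.
move=> h1 h2 h3 h4; split.
  by rewrite mulmxA -(mulmxA P) h3 mulmx1 h1.
by rewrite mulmxA -(mulmxA Qinv) h2 mulmx1 h4.
Qed.

Lemma expand4 (X Y Z : 'M[D]_N) :
  (1%:M + X) *m Y *m (1%:M + Z) = Y + Y *m Z + X *m Y + X *m Y *m Z.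
Proof.
by rewrite !(mulmxDl, mulmxDr) !(mul1mx, mulmx1) !addrA (addrAC Y).
Qed.

Lemma transv_inv (a : D) (p q : 'I_N) : q != p ->
  (1%:M + Em a p q) *m (1%:M + Em (- a) p q) = 1%:M.
Proof.
move=> qp; rewrite !(mulmxDl, mulmxDr) !(mul1mx, mulmx1).
have h : Em a p q *m Em (- a) p q = 0.
  by rewrite -(mulmx1 (Em a p q)) EmXEm mxE (negbTE qp) mulr0n mulr0 mul0r Em0.
by rewrite h addr0 -addrA -EmD addNr Em0 addr0.
Qed.


Lemma addE (X Y : 'M[D]_N) i j : (X + Y) i j = X i j + Y i j.
Proof. by rewrite mxE. Qed.

Lemma stepA (nb : ~ (eta = -1 /\ forall x : D, s x = x)) (kk : 'I_N) (P Pinv : 'M[D]_N) :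
  P *m Pinv = 1%:M -> Pinv *m P = 1%:M ->
  (forall i j : 'I_N, (i < kk)%N -> i != j -> BB P i j = 0) ->
  exists P' Pinv' : 'M[D]_N, [/\ P' *m Pinv' = 1%:M, Pinv' *m P' = 1%:M,
    (forall i j : 'I_N, (i < kk)%N -> i != j -> BB P' i j = 0) & BB P' kk kk != 0].
Proof.
move=> h1 h2 hz.
case: (eqVneq (BB P kk kk) 0) => [b0|bnz]; last by exists P, Pinv.
have [j hj] := rowB h1 h2 kk.
have jk : j != kk by apply/eqP => jk; move: hj; rewrite jk b0 eqxx.
have jnl : ~~ (j < kk)%N.
  by apply/negP => jl; move: hj; rewrite hermB (hz j kk jl jk) (s0 Hs) mulr0 eqxx.
have [lam hl] := ex_lam nb (BB P j j) hj.
have kj : kk != j by rewrite eq_sym.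
have q2 : (1%:M + Em (- lam) j kk) *m (1%:M + Em lam j kk) = 1%:M.
  by rewrite -{2}(opprK lam) transv_inv.
have [h3 h4] := inv_comp h1 h2 (transv_inv lam kj) q2.
exists (P *m (1%:M + Em lam j kk)), ((1%:M + Em (-lam) j kk) *m Pinv); split => //.
  move=> i m hi im.
  have ik : (i == kk) = false.
    by apply/negbTE; apply: contraTneq hi => ->; rewrite ltnn.
  have ij : i != j by apply: contraTneq hi => ->.
  rewrite BB_comp msD // ms1 // (msEm Hs lam j kk) expand4 !addE EmXEm XEmE EmXE EmE ik.
  rewrite (hz i m hi im) (hz i j hi ij).
  by case: (m == kk); rewrite ?mul0r !addr0.
rewrite BB_comp msD // ms1 // (msEm Hs lam j kk) expand4 !addE EmXEm XEmE EmXE EmE !eqxx b0 add0r.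
by rewrite (hermB P kk j).
Qed.


Lemma stepB (kk : 'I_N) (P Pinv : 'M[D]_N) :
  P *m Pinv = 1%:M -> Pinv *m P = 1%:M ->
  (forall i j : 'I_N, (i < kk)%N -> i != j -> BB P i j = 0) ->
  BB P kk kk != 0 ->
  exists P' Pinv' : 'M[D]_N, [/\ P' *m Pinv' = 1%:M, Pinv' *m P' = 1%:M &
    (forall i j : 'I_N, (i < kk.+1)%N -> i != j -> BB P' i j = 0)].
Proof.
move=> h1 h2 hz bnz.
have bu := Hunit bnz.
pose t (m : 'I_N) := if (kk < m)%N then - ((BB P kk kk)^-1 * BB P kk m) else 0.
pose R : 'M[D]_N := \matrix_(i, m) (if i == kk then t m else 0).
pose C : 'M[D]_N := \matrix_(i, m) (if m == kk then s (t i) else 0).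
have tk : t kk = 0 by rewrite /t ltnn.
have XR : forall (X : 'M[D]_N) i m, (X *m R) i m = X i kk * t m.
  move=> X i m; rewrite mxE (bigD1 kk) //= big1 ?addr0; first by rewrite mxE eqxx.
  by move=> x /negbTE xk; rewrite mxE xk mulr0.
have CX : forall (X : 'M[D]_N) i m, (C *m X) i m = s (t i) * X kk m.
  move=> X i m; rewrite mxE (bigD1 kk) //= big1 ?addr0; first by rewrite mxE eqxx.
  by move=> x /negbTE xk; rewrite mxE xk mul0r.
have msR : ms R = C.
  by apply/matrixP => i m; rewrite msE !mxE; case: (m == kk); rewrite ?(s0 Hs).
have RR : R *m R = 0.
  by apply/matrixP => i m; rewrite XR mxE tk if_same mul0r mxE.
have q1 : (1%:M + R) *m (1%:M - R) = 1%:M.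
  by rewrite mulmxDl mul1mx mulmxBr mulmx1 RR subr0 subrK.
have q2 : (1%:M - R) *m (1%:M + R) = 1%:M.
  by rewrite mulmxBl mul1mx mulmxDr mulmx1 RR addr0 addrK.
have [h3 h4] := inv_comp h1 h2 q1 q2.
exists (P *m (1%:M + R)), ((1%:M - R) *m Pinv); split => //.
move=> i m hi im.
rewrite BB_comp msD // ms1 // msR expand4 !addE !XR !CX.
case: (ltnP i kk) => [ilt | ige].
  have ti : t i = 0 by rewrite /t ltnNge (ltnW ilt).
  have ik : i != kk by apply: contraTneq ilt => ->; rewrite ltnn.
  by rewrite ti (s0 Hs) !mul0r (hz i m ilt im) (hz i kk ilt ik) mul0r !addr0.
have ik : i = kk by apply: val_inj; apply/eqP; rewrite eqn_leq -ltnS hi ige.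
subst i.
rewrite tk (s0 Hs) !mul0r !addr0 /t.
case: ltnP => [km | mk].
  by rewrite mulrN mulVKr // subrr.
have mlt : (m < kk)%N by rewrite ltn_neqAle mk andbT eq_sym.
by rewrite mulr0 addr0 (hermB P m kk) (hz m kk mlt) ?(s0 Hs) ?mulr0 // eq_sym.
Qed.


Lemma diagz (nb : ~ (eta = -1 /\ forall x : D, s x = x)) :
  exists P Pinv : 'M[D]_N, [/\ P *m Pinv = 1%:M, Pinv *m P = 1%:M &
    forall i j : 'I_N, i != j -> BB P i j = 0].
Proof.
suff: forall k, (k <= N)%N -> exists P Pinv : 'M[D]_N,
    [/\ P *m Pinv = 1%:M, Pinv *m P = 1%:M &
      forall i j : 'I_N, (i < k)%N -> i != j -> BB P i j = 0].
  move=> /(_ N (leqnn N)) [P [Pinv [h1 h2 h3]]]; exists P, Pinv; split => // i j.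
  exact: h3 (ltn_ord i).
elim=> [_|k IH hk].
  by exists 1%:M, 1%:M; split; rewrite ?mulmx1.
have [P [Pinv [h1 h2 h3]]] := IH (ltnW hk).
pose kk : 'I_N := Ordinal hk.
have [P' [Pinv' [h1' h2' h3' hb]]] := @stepA nb kk P Pinv h1 h2 h3.
exact: stepB h1' h2' h3' hb.
Qed.

Lemma L34 (nb : ~ (eta = -1 /\ forall x : D, s x = x)) :
  (exists M, herm_cone ms (e%:M) M /\ M A) ->
  exists (P Pinv : 'M[D]_N) (d : 'rV[D]_N),
           [/\ P *m Pinv = 1%:M, Pinv *m P = 1%:M,
               ms P *m A *m P = diag_mx d &
               exists M : D -> Prop, herm_cone s e M /\
                 forall i, M (d 0 i)].
Proof.
move=> [M [[Mh Mp Mc M0 Ma] MA]].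
have [P [Pinv [h1 h2 h3]]] := diagz nb.
have MB : M (BB P).
  have := Mc (ms P) A MA; rewrite msK //.
exists P, Pinv, (\row_i BB P i i); split => //.
  apply/matrixP => i j; transitivity (BB P i j); first by [].
  rewrite [RHS]mxE [X in _ = X *+ _]mxE; case: (eqVneq i j) => [->|ij]; first by rewrite mulr1n.
  by rewrite mulr0n h3.
exists (fun c => M (Em c ord0 ord0)); split.
  split.
  - move=> c /Mh; rewrite /eps_herm => h.
    change (e%:M *m ms (Em c ord0 ord0) = Em c ord0 ord0) in h.
    move/matrixP: h => /(_ ord0 ord0); rewrite mul_scalar_mx mxE (msEm Hs c ord0 ord0) !EmE eqxx.
    done.
  - by move=> a b ha hb; rewrite EmD; exact: Mp.
  - move=> a x hx; have := Mc (Em a ord0 ord0) _ hx.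
    change (M (Em a ord0 ord0 *m Em x ord0 ord0 *m ms (Em a ord0 ord0)) -> M (Em (a * x * s a) ord0 ord0)).
    by rewrite (msEm Hs a ord0 ord0) EmXEm EmE eqxx.
  - by rewrite Em0.
  move=> x h1' h2'; rewrite EmN in h2'; have := Ma _ h1' h2'.
  by move/matrixP/(_ ord0 ord0); rewrite EmE eqxx mxE.
move=> i; have := Mc (Em 1 ord0 i) _ MB.
change (M (Em 1 ord0 i *m BB P *m ms (Em 1 ord0 i)) -> M (Em ((\row_i BB P i i) 0 i) ord0 ord0)).
by rewrite (msEm Hs 1 ord0 i) (s1 Hs) EmXEm mul1r mulr1 mxE.
Qed.


Lemma L43 (nb : ~ (eta = -1 /\ forall x : D, s x = x)) :
  (exists (P Pinv : 'M[D]_N) (d : 'rV[D]_N),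
           [/\ P *m Pinv = 1%:M, Pinv *m P = 1%:M,
               ms P *m A *m P = diag_mx d &
               exists M : D -> Prop, herm_cone s e M /\
                 forall i, M (d 0 i)]) ->
  exists M, herm_cone ms (e%:M) M /\ M A.
Proof.
move=> [P [Pinv [d [h1 h2 hd [MD [[Dh Dp Dc D0 Da] Dd]]]]]].
pose Q (Y V : 'M[D]_N) := (ms V *m Y *m V) ord0 ord0.
pose M3 Y := e%:M *m ms Y = Y /\ forall V, MD (Q Y V).
have Mc3 : forall a Y, M3 Y -> M3 (a *m Y *m ms a).
  move=> a Y [hY hQ]; split.
    rewrite !msM // msK // (mulmxA e%:M a) -E_c -(mulmxA a e%:M).
    by rewrite (mulmxA e%:M (ms Y)) hY mulmxA.
  move=> V; have -> : Q (a *m Y *m ms a) V = Q Y (ms a *m V).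
    by rewrite /Q msM // msK // !mulmxA.
  exact: hQ.
have M3D : forall Y1 Y2, M3 Y1 -> M3 Y2 -> M3 (Y1 + Y2).
  move=> Y1 Y2 [hY1 hQ1] [hY2 hQ2]; split.
    by rewrite msD // mulmxDr hY1 hY2.
  by move=> V; rewrite /Q mulmxDr mulmxDl addE; apply: Dp; [exact: hQ1 | exact: hQ2].
have M30 : M3 0.
  split; first by rewrite ms0 // mulmx0.
  by move=> V; rewrite /Q mulmx0 mul0mx mxE.
have M3a : forall Y, M3 Y -> M3 (- Y) -> Y = 0.
  move=> Y [hY hQ] [_ hQ'].
  have hQ0 : forall V, Q Y V = 0.
    move=> V; apply: Da (hQ V) _.
    by have := hQ' V; rewrite /Q mulmxN mulNmx mxE.
  have hd0 : forall i, Y i i = 0.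
    move=> i; have := hQ0 (Em 1 i ord0).
    by rewrite /Q (msEm Hs 1 i ord0) (s1 Hs) EmXEm EmE eqxx mul1r mulr1.
  have hji : forall i j, Y j i = e * s (Y i j).
    by move=> i j; move/matrixP: hY => /(_ j i); rewrite mul_scalar_mx mxE msE => <-.
  apply/matrixP => i j; rewrite [RHS]mxE.
  case: (eqVneq i j) => [->|ij]; first exact: hd0.
  apply: (key nb) => lam.
  have := hQ0 (Em 1 i ord0 + Em lam j ord0).
  rewrite /Q msD // (msEm Hs 1 i ord0) (msEm Hs lam j ord0) (s1 Hs).
  rewrite !(mulmxDl, mulmxDr) !EmXEm !addE !EmE !eqxx /= hd0 hd0 mul1r !mulr1 mul1r.
  by rewrite mulr0 mul0r add0r addr0 addrC -hji.
have hA : A = ms Pinv *m diag_mx d *m ms (ms Pinv).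
  rewrite msK // -hd !mulmxA -msM // h1 ms1 // mul1mx -mulmxA h1 mulmx1 //.
have Mdiag : M3 (diag_mx d).
  split.
    apply/matrixP => i j; rewrite mul_scalar_mx mxE msE !mxE.
    case: (eqVneq i j) => [->|ij]; first by rewrite !mulr1n; exact: Dh (Dd j).
    by rewrite !mulr0n (s0 Hs) mulr0.
  move=> V; rewrite /Q mxE; apply: big_ind => //.
  move=> m _; rewrite mul_mx_diag mxE msE.
  by have := Dc (s (V m ord0)) _ (Dd m); rewrite sK.
exists M3; split; last by rewrite hA; exact: Mc3.
split; [by move=> Y [] | exact: M3D | by move=> a x hx; exact: Mc3 | exact: M30 | exact: M3a].
Qed.


Lemma part2 : eta = -1 -> (forall x : D, s x = x) -> ~ formally_real sh.
Proof.
move=> he hid fr.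
have eN : e = -1 by rewrite he scaleN1r.
have Bskew : forall i j, Ainv j i = - Ainv i j.
  move=> i j; have := msAi; move/matrixP => /(_ i j).
  by rewrite msE hid mul_scalar_mx mxE eN mulN1r.
have Bd : forall i, Ainv i i = 0.
  by move=> i; apply: two_reg; rewrite {1}Bskew addNr.
have [i [j hij]] : exists i j, Ainv i j != 0.
  case: (classic (exists i j, Ainv i j != 0)) => // hn; exfalso.
  have h0 : Ainv = 0.
    apply/matrixP => i j; rewrite mxE; apply/eqP; apply/negPn/negP => hij.
    by apply: hn; exists i, j.
  have := HAAi; rewrite h0 mulmx0 => /matrixP /(_ ord0 ord0).
  by rewrite !mxE eqxx /= => /eqP; rewrite eq_sym oner_eq0.
have ij : i != j by apply: contraNneq hij => ->; rewrite Bd.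
have cu := Hunit hij.
set c := Ainv i j in hij cu.
have cji : Ainv j i = - c by rewrite Bskew.
pose r1 : 'M[D]_N := Em 1 i i + Em c^-1 j j.
pose r2 : 'M[D]_N := Em 1 j i + Em c^-1 i j.
pose K : 'M[D]_N := Em 1 i j + Em (-1) j i.
have t1 : r1 * sh r1 = K *m A.
  change (r1 *m (Ainv *m ms r1 *m A) = K *m A).
  rewrite !mulmxA; congr (_ *m A).
  rewrite /r1 msD // (msEm Hs 1 i i) (msEm Hs c^-1 j j) !hid.
  rewrite !(mulmxDl, mulmxDr) !EmXEm Bd Bd cji -/c.
  rewrite !mulr0 !mul0r !Em0 !mul1r mulrN mulVr // mulrV // mulr1 add0r addr0 /K.
  by rewrite addrC.
have t2 : r2 * sh r2 = - (K *m A).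
  change (r2 *m (Ainv *m ms r2 *m A) = - (K *m A)).
  rewrite !mulmxA -mulNmx; congr (_ *m A).
  rewrite /r2 msD // (msEm Hs 1 j i) (msEm Hs c^-1 i j) !hid.
  rewrite !(mulmxDl, mulmxDr) !EmXEm Bd Bd cji -/c.
  rewrite !mulr0 !mul0r !Em0 !mul1r mulrN mulVr // mulrV // mulr1 add0r addr0 /K.
  by rewrite opprD -!EmN opprK addrC.
have KA : K *m A != 0.
  apply/eqP => h; have : K *m A *m Ainv = 0 by rewrite h mul0mx.
  rewrite -mulmxA HAAi mulmx1 => /matrixP /(_ i j).
  rewrite addE !EmE !eqxx (negbTE ij) /= addr0 mxE => /eqP.
  by rewrite oner_eq0.
have := fr [:: r1; r2] isT.
rewrite /= t1 t2 oppr_eq0 KA /= big_cons big_seq1 t1 t2 addrN eqxx.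
by move/(_ isT).
Qed.

End Main.

Theorem corollary1p4
  (F : fieldType) (D : falgType F) (star : D -> D) (eta : F)
  (n : nat) (A Ainv : 'M[D]_n.+1) :
  (* char F <> 2 *)
  (2%:R : F) != 0 ->
  (* D is a division algebra *)
  (forall x : D, x != 0 -> x \is a GRing.unit) ->
  (* D is central over F *)
  (forall z : D, (forall x : D, z * x = x * z) -> exists a : F, z = a%:A) ->
  (* star is an involution on D with F^* \subseteq F *)
  is_involution star ->
  (forall a : F, exists b : F, star a%:A = b%:A) ->
  (* eta eta^* = 1 *)
  eta%:A * star eta%:A = 1 ->
  (* A invertible with inverse Ainv, and eta A^* = A *)
  A *m Ainv = 1%:M -> Ainv *m A = 1%:M ->
  eps_herm (@mstar D star n.+1) (eta%:A)%:M A ->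
  (~ (eta = -1 /\ forall x : D, star x = x) ->
    [<-> formally_real (sharp star A Ainv);
         exists M, herm_cone (sharp star A Ainv) 1 M /\ M 1;
         exists M, herm_cone (@mstar D star n.+1) (eta%:A)%:M M /\ M A;
         exists (P Pinv : 'M[D]_n.+1) (d : 'rV[D]_n.+1),
           [/\ P *m Pinv = 1%:M, Pinv *m P = 1%:M,
               mstar star P *m A *m P = diag_mx d &
               exists M : D -> Prop, herm_cone star (eta%:A) M /\
                 forall i, M (d 0 i)]])
  /\
  (eta = -1 /\ (forall x : D, star x = x) ->
    ~ formally_real (sharp star A Ainv)).
Proof.
move=> H2 Hunit Hcent Hs Hsc Heta HAAi HAiA HAh; split.
  move=> nb; tfae.
  - by move=> h; eapply L12; try eassumption.
  - by move=> h; eapply L23; try eassumption.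
  - by move=> h; eapply L34; try eassumption.
  move=> h; eapply L21; try eassumption.
  eapply L32; try eassumption.
  eapply L43; eassumption.
move=> [he hid]; eapply part2; eassumption.
Qed.
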